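(* For a $*$-ring $R$ the following are equivalent: (1) $R$ is a generalized p.q.-Baer $*$-ring; (2) $R$ is a weakly generalized p.q.-Baer $*$-ring with unity.
   Context: A $*$-ring is a ring with an involution; a projection is $e$ with $e=e^*=e^2$. $r_R(S)=\{a\in R: sa=0\ \forall s\in S\}$. $R$ is a generalized p.q.-Baer $*$-ring if for every $x\in R$ there are $n\in\mathbb N$ and a projection $e$ with $r_R((xR)^n)=eR$. $R$ is a weakly generalized p.q.-Baer $*$-ring if for every $x\in R$ there exist a central projection $e$ and $n\in\mathbb N$ such that $x^ne=x^n$ and, for all $y\in R$, $(xR)^ny=\{0\}$ iff $ey=0$. *)

(* Defs.v *)
From HB Require Import structures.
From mathcomp Require Import all_boot all_algebra.
Set Implicit Arguments. Unset Strict Implicit. Unset Printing Implicit Defensive.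
Import GRing.Theory.
Local Open Scope ring_scope.

(* A (not necessarily unital) ring is an additive abelian group R (zmodType)
   with an associative multiplication [mul] distributing over +.
   A *-ring additionally carries an involution [star]. *)
Definition is_star_ring (R : zmodType) (mul : R -> R -> R) (star : R -> R) : Prop :=
  (forall a b c, mul a (mul b c) = mul (mul a b) c) /\
  (forall a b c, mul a (b + c) = mul a b + mul a c) /\
  (forall a b c, mul (a + b) c = mul a c + mul b c) /\
  (forall a b, star (a + b) = star a + star b) /\
  (forall a b, star (mul a b) = mul (star b) (star a)) /\
  (forall a, star (star a) = a).

Section Defs.
Variables (R : zmodType) (mul : R -> R -> R) (star : R -> R).

Definition is_projection (e : R) : Prop := e = star e /\ mul e e = e.

Definition is_central (e : R) : Prop := forall y, mul e y = mul y e.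

Definition has_unity : Prop := exists u : R, forall a, mul u a = a /\ mul a u = a.

(* xpow x m = x^(m+1) *)
Fixpoint xpow (x : R) (m : nat) : R :=
  match m with 0 => x | m'.+1 => mul (xpow x m') x end.

(* xRpow x m a  <->  a is a product s_1 ... s_(m+1) with each s_i in xR,
   i.e. a is in (xR)^(m+1). *)
Fixpoint xRpow (x : R) (m : nat) (a : R) : Prop :=
  match m with
  | 0 => exists r, a = mul x r
  | m'.+1 => exists r b, xRpow x m' b /\ a = mul b (mul x r)
  end.

Definition in_rann (S : R -> Prop) (y : R) : Prop := forall s, S s -> mul s y = 0.

(* generalized p.q.-Baer *-ring: for each x there are n >= 1 (n = m+1) and a
   projection e with r_R((xR)^n) = eR *)
Definition gen_pq_baer : Prop :=
  forall x : R, exists (m : nat) (e : R), is_projection e /\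
    (forall y, in_rann (xRpow x m) y <-> exists r, y = mul e r).

Definition weakly_gen_pq_baer : Prop :=
  forall x : R, exists (e : R) (m : nat), is_projection e /\ is_central e /\
    mul (xpow x m) e = xpow x m /\
    (forall y, in_rann (xRpow x m) y <-> mul e y = 0).

End Defs.

(* Main.v *)
Require Import Defs.
From mathcomp Require Import all_boot all_algebra.
Import GRing.Theory.
Local Open Scope ring_scope.

Lemma xRpow_mulr (R : zmodType) (mul : R -> R -> R) :
  (forall a b c, mul a (mul b c) = mul (mul a b) c) ->
  forall x m s r, xRpow mul x m s -> xRpow mul x m (mul s r).
Proof.
move=> mA x [|m] s r /=.
  by case=> r0 ->; exists (mul r0 r); rewrite mA.
by case=> r0 [b [Hb ->]]; exists (mul r0 r), b; split=> //; rewrite -!mA.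
Qed.

Lemma xRpow_xpow (R : zmodType) (mul : R -> R -> R) u :
  (forall a, mul u a = a /\ mul a u = a) ->
  forall x m, xRpow mul x m (xpow mul x m).
Proof.
move=> hu x; elim=> [|m IH] /=.
  by exists u; rewrite (proj2 (hu x)).
by exists u, (xpow mul x m); rewrite (proj2 (hu x)).
Qed.

Theorem mainTheorem9 (R : zmodType) (mul : R -> R -> R) (star : R -> R) :
  is_star_ring mul star ->
  (gen_pq_baer mul star <-> (weakly_gen_pq_baer mul star /\ has_unity mul)).
Proof.
move=> [mA [mDr [mDl [sD [sM sK]]]]].
have m0r a : mul a 0 = 0.
  have := mDr a 0 0; rewrite addr0.
  by move/(congr1 (fun z => z - mul a 0)); rewrite subrr addrK.
have m0l a : mul 0 a = 0.
  have := mDl 0 0 a; rewrite addr0.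
  by move/(congr1 (fun z => z - mul 0 a)); rewrite subrr addrK.
have mBr a b c : mul a (b - c) = mul a b - mul a c.
  by rewrite -[in RHS](subrK c b) [in RHS]mDr addrK.
have mBl a b c : mul (a - c) b = mul a b - mul c b.
  by rewrite -[in RHS](subrK c a) [in RHS]mDl addrK.
have sB a b : star (a - b) = star a - star b.
  by rewrite -[in RHS](subrK b a) [in RHS]sD addrK.
have projC u e : (forall a, mul u a = a /\ mul a u = a) ->
    is_projection mul star e -> is_projection mul star (u - e).
  move=> hu [he1 he2]; split.
    have su : star u = u.
      have := sM u (star u); rewrite (proj1 (hu _)) !sK (proj1 (hu _)).
      by move=> h; rewrite -h.
    by rewrite sB su -he1.
  rewrite mBl !mBr !(proj1 (hu _)) (proj2 (hu _)) he2 subrr subr0 //.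
split.
- move=> H.
  have [u hu] : has_unity mul.
    have [m [e [[he1 he2] He]]] := H 0.
    have ey y : mul e y = y.
      have : in_rann mul (xRpow mul 0 m) y.
        move=> s; case: m {He} => [|m] /=.
          by case=> r ->; rewrite m0l m0l.
        by case=> r [b [_ ->]]; rewrite m0l m0r m0l.
      by move/He=> [r ->]; rewrite mA he2.
    exists e => a; split=> //.
    have := sM e (star a); rewrite ey sK => h.
    by rewrite -he1 in h; rewrite -h.
  split; last by exists u.
  move=> x; have [m [e [[he1 he2] He]]] := H x.
  have eRe r : mul r e = mul e (mul r e).
    have : in_rann mul (xRpow mul x m) (mul r e).
      move=> s hs; rewrite mA.
      have : exists r0, e = mul e r0 by exists e.
      by move/He; apply; apply: xRpow_mulr.
    by move/He=> [r' ->]; rewrite mA he2.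
  have ec r : mul e r = mul r e.
    have := eRe (star r).
    move/(congr1 star); rewrite !sM sK -he1 => h.
    by rewrite h -mA -eRe.
  exists (u - e), m; split; first exact: projC.
  split; first by move=> y; rewrite mBl mBr ec (proj1 (hu _)) (proj2 (hu _)).
  split.
    rewrite mBr (proj2 (hu _)).
    have : in_rann mul (xRpow mul x m) e by apply/He; exists e.
    by move/(_ _ (@xRpow_xpow _ _ u hu x m)) ->; rewrite subr0.
  move=> y; split.
    by move/He=> [r ->]; rewrite mBl (proj1 (hu _)) mA he2 subrr.
  move=> h; apply/He; exists y.
  by move/eqP: h; rewrite mBl (proj1 (hu _)) subr_eq0 => /eqP.
- move=> [H [u hu]] x.
  have [e [m [[he1 he2] [_ [_ He]]]]] := H x.
  exists m, (u - e); split; first exact: projC.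
  move=> y; split.
    move/He=> h; exists y.
    by rewrite mBl (proj1 (hu _)) h subr0.
  move=> [r ->]; apply/He.
  by rewrite mA mBr (proj2 (hu _)) he2 subrr m0l.
Qed.
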